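(* For any entrywise nonnegative ${\mathbf\Lambda},{\mathbf V}$ and any $\alpha>0$, $$\sqrt{\sum_{\ell\in[\![L]\!],\,s\in[K]}\big(\mathcal U_s(\hat\pi_{{\mathbf\Lambda},{\mathbf V}},\ell)-\epsilon_s\big)_+^2}\le\|\mathbf G_{\hat F,\alpha}({\mathbf\Lambda},{\mathbf V})\|+\big(\mathbb E\|\hat{\mathbf t}(X)-\mathbf t(X)\|^2\big)^{1/2}.$$
   Context: Let $K\ge 2$, $d\ge1$, and let $(X,S,Y)$ be a random triple with values in $\mathbb R^d\times[K]\times\mathbb R$. Put $p_s=\mathbb P(S=s)>0$, $\tau_s(x)=\mathbb P(S=s\mid X=x)$, $t_s(x)=1-\tau_s(x)/p_s$, $\mathbf t=(t_s)_{s\in[K]}$. Fix $B>0$, $L\in\mathbb N$, $\beta>0$, $\boldsymbol\epsilon=(\epsilon_s)\in[0,1]^K$, $[\![L]\!]=\{-L,\dots,L\}$. Let $\hat\eta:\mathbb R^d\to\mathbb R$ and $\hat{\boldsymbol\tau}=(\hat\tau_s)_{s}:\mathbb R^d\to[0,1]^K$ be fixed (deterministic) measurable functions with $\mathbb E[\hat\eta(X)^2]<\infty$; set $\hat t_s(x)=1-\hat\tau_s(x)/p_s$, $\hat{\mathbf t}=(\hat t_s)_s$, $\hat r_\ell(x)=(\hat\eta(x)-\ell B/L)^2$. $\mathrm{LSE}_\beta(\mathbf w)=\beta^{-1}\log\sum_j e^{\beta w_j}$, $\sigma_j(\mathbf w)=e^{w_j}/\sum_ie^{w_i}$. For ${\mathbf\Lambda}=(\lambda_{\ell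 s}),{\mathbf V}=(\nu_{\ell s})$ with rows $\boldsymbol\lambda_\ell,\boldsymbol\nu_\ell\in\mathbb R^K$: $\hat F({\mathbf\Lambda},{\mathbf V})=\mathbb E\big[\mathrm{LSE}_\beta\big((\langle\boldsymbol\lambda_\ell-\boldsymbol\nu_\ell,\hat{\mathbf t}(X)\rangle-\hat r_\ell(X))_{\ell\in[\![L]\!]}\big)\big]+\sum_\ell\langle\boldsymbol\lambda_\ell+\boldsymbol\nu_\ell,\boldsymbol\epsilon\rangle$ and $\hat\pi_{{\mathbf\Lambda},{\mathbf V}}(\ell\mid x)=\sigma_\ell\big(\beta(\langle\boldsymbol\lambda_{\ell'}-\boldsymbol\nu_{\ell'},\hat{\mathbf t}(x)\rangle-\hat r_{\ell'}(x))_{\ell'\in[\![L]\!]}\big)$, a randomized prediction putting mass $\hat\pi_{{\mathbf\Lambda},{\mathbf V}}(\ell\mid x)$ on $\ell B/L$. For such a grid-supported $\pi$, $\mathcal U_s(\pi,\ell)=|\mathbb E[\pi(\ell\mid X)\mid S=s]-\mathbb E[\pi(\ell\mid X)]|$. $(a)_+=\max(a,0)$ entrywise; gradient mapping $\mathbf G_{\hat F,\alpha}({\mathbf\Lambda},{\mathbf V})=\alpha^{-1}[({\mathbf\Lambda},{\mathbf V})-(({\mathbf\Lambda},{\mathbf V})-\alpha\nabla\hat F({\mathbf\Lambda},{\mathbf V}))_+]$; $\|\cdot\|$ is the Euclidean norm. *)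

(* Defs.v *)
From HB Require Import structures.
From mathcomp Require Import all_boot all_order all_algebra.
From mathcomp Require Import all_classical all_reals all_analysis.
Set Implicit Arguments. Unset Strict Implicit. Unset Printing Implicit Defensive.
Import Order.TTheory GRing.Theory Num.Theory.
Import numFieldNormedType.Exports.
Local Open Scope classical_set_scope.
Local Open Scope ring_scope.

(* Conventions:
   - [K] is 'I_K, the grid index set [[L]] = {-L,...,L} is 'I_(2L+1),
     the index l : 'I_(2L+1) standing for the integer l - L.
   - R^d is d.-tuple R with its product (= Borel) sigma-algebra.
   - matrices Lambda, V : 'M[R]_(2L+1, K), row l = lambda_l, column s.  *)

Section defs.
Variables (R : realType) (dT : measure_display) (T : measurableType dT)
          (P : probability T R).

Definition Ex (f : T -> R) : R := fine (\int[P]_w (f w)%:E).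

Definition indic (b : bool) : R := if b then 1 else 0.

Definition gridv (L : nat) (B : R) (l : 'I_(2 * L + 1)) : R :=
  ((l%:R - L%:R) * B) / L%:R.

Definition LSE (n : nat) (beta : R) (w : 'I_n -> R) : R :=
  beta^-1 * ln (\sum_(j < n) expR (beta * w j)).

Definition softmax (n : nat) (w : 'I_n -> R) (j : 'I_n) : R :=
  expR (w j) / \sum_(i < n) expR (w i).

Variables (d K L : nat) (B beta : R) (eps : 'I_K -> R) (p : 'I_K -> R)
  (etah : d.-tuple R -> R) (tauh : 'I_K -> d.-tuple R -> R).

Definition that (s : 'I_K) (x : d.-tuple R) : R := 1 - tauh s x / p s.

Definition rhat (l : 'I_(2 * L + 1)) (x : d.-tuple R) : R :=
  (etah x - gridv B l) ^+ 2.

Definition scorev (Lam V : 'M[R]_(2 * L + 1, K)) (x : d.-tuple R)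
  (l : 'I_(2 * L + 1)) : R :=
  \sum_(s < K) (Lam l s - V l s) * that s x - rhat l x.

Variable X : T -> d.-tuple R.

Definition Fhat (Lam V : 'M[R]_(2 * L + 1, K)) : R :=
  Ex (fun w => LSE beta (scorev Lam V (X w)))
  + \sum_(l < 2 * L + 1) \sum_(s < K) (Lam l s + V l s) * eps s.

Definition pihat (Lam V : 'M[R]_(2 * L + 1, K)) (l : 'I_(2 * L + 1))
  (x : d.-tuple R) : R :=
  softmax (fun l' => beta * scorev Lam V x l') l.

Variable S : T -> 'I_K.

(* U_s(pi, l) = | E[pi(l|X) | S = s] - E[pi(l|X)] |, with
   E[Z | S = s] = E[Z 1{S=s}] / P(S=s) *)
Definition Ufair (pi : 'I_(2 * L + 1) -> d.-tuple R -> R) (s : 'I_K)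
  (l : 'I_(2 * L + 1)) : R :=
  `| Ex (fun w => pi l (X w) * indic (S w == s)) / p s
     - Ex (fun w => pi l (X w)) |.

Definition dF_lam (Lam V : 'M[R]_(2 * L + 1, K)) l s : R :=
  derive1 (fun h : R => Fhat (Lam + h *: delta_mx l s) V) 0.
Definition dF_nu (Lam V : 'M[R]_(2 * L + 1, K)) l s : R :=
  derive1 (fun h : R => Fhat Lam (V + h *: delta_mx l s)) 0.

Definition Gmap_lam (alpha : R) (Lam V : 'M[R]_(2 * L + 1, K)) l s : R :=
  alpha^-1 * (Lam l s - Num.max (Lam l s - alpha * dF_lam Lam V l s) 0).
Definition Gmap_nu (alpha : R) (Lam V : 'M[R]_(2 * L + 1, K)) l s : R :=
  alpha^-1 * (V l s - Num.max (V l s - alpha * dF_nu Lam V l s) 0).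

Definition Gmap_norm (alpha : R) (Lam V : 'M[R]_(2 * L + 1, K)) : R :=
  Num.sqrt (\sum_(l < 2 * L + 1) \sum_(s < K)
              (Gmap_lam alpha Lam V l s ^+ 2 + Gmap_nu alpha Lam V l s ^+ 2)).

End defs.

(* Main.v *)
Require Import Defs.
From HB Require Import structures.
From mathcomp Require Import all_boot all_order all_algebra.
From mathcomp Require Import all_classical all_reals all_analysis.
From mathcomp Require Import measurable_realfun.
From mathcomp Require Import ring lra.
Set Implicit Arguments. Unset Strict Implicit. Unset Printing Implicit Defensive.
Import Order.TTheory GRing.Theory Num.Theory.
Import numFieldNormedType.Exports.
Local Open Scope classical_set_scope.
Local Open Scope ring_scope.
Section RealLemmas.
Variable R : realType.

Lemma expm1_bound (v : R) : expR v - 1 - v <= `|v| * (expR `|v| - 1).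
Proof.
have hh := expRxMexpNx_1 v.
have hE := expR_gt0 v. have hE' := expR_gt0 (- v).
have [v0|v0] := leP 0 v.
- rewrite ger0_norm //.
  have h := expR_ge1Dx (- v).
  nra.
- rewrite ltr0_norm //.
  have h := expR_ge1Dx (- v).
  nra.
Qed.

Lemma ln_ge_1Vz (z : R) : 0 < z -> 1 - z^-1 <= ln z.
Proof.
move=> z0.
have h := @le_ln1Dx R (z^-1 - 1).
have hz : 0 < z^-1 by rewrite invr_gt0.
have : ln (1 + (z^-1 - 1)) <= z^-1 - 1 by apply: h; lra.
rewrite addrC subrK lnV; last by rewrite posrE.
lra.
Qed.

Lemma lse_core (q y beta : R) : 0 <= q <= 1 -> 0 < beta ->
  `| beta^-1 * ln (1 + q * (expR (beta * y) - 1)) - q * y |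
    <= `|y| * (expR (beta * `|y|) - 1).
Proof.
move=> /andP[q0 q1] b0.
set u := beta * y. set E := expR u.
have E0 : 0 < E by apply: expR_gt0.
set z := 1 + q * (E - 1).
have z0 : 0 < z.
  have : 0 <= q * E by rewrite mulr_ge0 // ltW.
  rewrite /z; nra.
have hu : `|u| = beta * `|y| by rewrite normrM gtr0_norm.
have hyu : y = beta^-1 * u by rewrite /u mulrA mulVf ?mul1r // gt_eqF.
have bi0 : 0 < beta^-1 by rewrite invr_gt0.
have up : ln z <= q * (E - 1).
  have := @le_ln1Dx R (q * (E - 1)); rewrite -/z; apply; nra.
have lo : q * (E - 1) / z <= ln z.
  have := @ln_ge_1Vz z z0.
  have -> : 1 - z^-1 = q * (E - 1) / z.
    rewrite /z; field; rewrite -/z gt_eqF //.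
  by [].
have hEN : expR (- u) * E = 1 by rewrite mulrC expRxMexpNx_1.
have lo2 : q * (1 - expR (- u)) <= q * (E - 1) / z.
  rewrite -subr_ge0.
  have -> : q * (E - 1) / z - q * (1 - expR (- u))
     = q * (1 - q) * (E - 1) ^+ 2 * expR (- u) / z.
    have hz : z != 0 by rewrite gt_eqF.
    have hE0 : E != 0 by rewrite gt_eqF.
    rewrite expRN -/E; move: hz; rewrite /z => hz; field.
    by rewrite hE0 hz.
  apply: divr_ge0; last by apply: ltW.
  apply: mulr_ge0; last by apply: expR_ge0.
  by apply: mulr_ge0; [nra | apply: sqr_ge0].
have m1 := expm1_bound u.
have m2 := expm1_bound (- u).
rewrite normrN in m2.
set Bd := `|u| * (expR `|u| - 1) in m1 m2.
have B0 : 0 <= Bd.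
  apply: mulr_ge0 => //; have := expR_ge1Dx `|u|; have := normr_ge0 u; lra.
have key : `|ln z - q * u| <= Bd.
  have qX : forall X, X <= Bd -> q * X <= Bd.
    move=> X hX; have [X0|X0] := leP 0 X.
      by apply: le_trans hX; rewrite -[X in _ <= X]mul1r ler_wpM2r.
    apply: le_trans B0; have : 0 <= q * (- X) by apply: mulr_ge0 => //; lra.
    rewrite mulrN; lra.
  have l1 := qX _ m1. have l2 := qX _ m2.
  rewrite ler_norml; apply/andP; split.
  - have := le_trans lo2 lo. rewrite /E in up l1. lra.
  - rewrite /E in up l1. lra.
have -> : beta^-1 * ln z - q * y = beta^-1 * (ln z - q * u) by rewrite hyu; ring.
rewrite normrM gtr0_norm // -hu.
have -> : `|y| = beta^-1 * `|u| by rewrite hyu normrM gtr0_norm.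
rewrite -mulrA; apply: ler_wpM2l; [exact: ltW | exact: key].
Qed.
End RealLemmas.
Section LSELemmas.
Variable R : realType.

Lemma sumexp_gt0 n (w : 'I_n -> R) (j : 'I_n) : 0 < \sum_(i < n) expR (w i).
Proof.
rewrite (bigD1 j) //=; apply: ltr_pwDl; first exact: expR_gt0.
by apply: sumr_ge0 => i _; apply: expR_ge0.
Qed.

Lemma softmax_ge0 n (w : 'I_n -> R) j : 0 <= softmax w j.
Proof. by rewrite /softmax divr_ge0 ?expR_ge0 ?sumr_ge0 // => i _; apply: expR_ge0. Qed.

Lemma softmax_sum n (w : 'I_n -> R) (j : 'I_n) : \sum_(i < n) softmax w i = 1.
Proof.
rewrite /softmax -mulr_suml mulfV //; rewrite gt_eqF //; exact: sumexp_gt0 j.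
Qed.

Lemma softmax_le1 n (w : 'I_n -> R) j : softmax w j <= 1.
Proof.
rewrite -(softmax_sum w j) (bigD1 j) //= lerDl.
by apply: sumr_ge0 => i _; apply: softmax_ge0.
Qed.

Lemma LSE_shift n (beta : R) (w : 'I_n -> R) (j : 'I_n) (y : R) : 0 < beta ->
  LSE beta (fun i => w i + (i == j)%:R * y) - LSE beta w
  = beta^-1 * ln (1 + softmax (fun i => beta * w i) j * (expR (beta * y) - 1)).
Proof.
move=> b0.
set Sg := \sum_(i < n) expR (beta * w i).
have S0 : 0 < Sg by exact: sumexp_gt0 j.
set q := softmax (fun i => beta * w i) j.
have hq : q = expR (beta * w j) / Sg by [].
have q0 : 0 <= q by apply: softmax_ge0.
have z0 : 0 < 1 + q * (expR (beta * y) - 1).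
  have := softmax_le1 (fun i => beta * w i) j; rewrite -/q => H1.
  have [->|qn] := eqVneq q 0; first by rewrite mul0r addr0.
  have : 0 < q * expR (beta * y) by rewrite mulr_gt0 ?expR_gt0 // lt_def qn.
  rewrite mulrBr mulr1; lra.
have hS : \sum_(i < n) expR (beta * (w i + (i == j)%:R * y))
          = Sg * (1 + q * (expR (beta * y) - 1)).
  rewrite (bigD1 j) //= eqxx mul1r /Sg [X in _ = X * _](bigD1 j) //=.
  rewrite (eq_bigr (fun i => expR (beta * w i))); last first.
    by move=> i /negPf ->; rewrite mul0r addr0.
  have hSg : Sg = expR (beta * w j) + \sum_(i < n | i != j) expR (beta * w i).
    by rewrite /Sg (bigD1 j).
  rewrite -hSg hq mulrDr expRD hSg.
  set a := expR (beta * w j); set r := \sum_(i < n | i != j) _.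
  have : a + r != 0 by rewrite -hSg gt_eqF.
  move=> h; field; exact: h.
rewrite /LSE hS lnM ?posrE //; ring.
Qed.

Lemma LSE_bound n (beta : R) (w : 'I_n -> R) (j0 : 'I_n) : 0 < beta ->
  `|LSE beta w| <= beta^-1 * ln n%:R + \sum_(i < n) `|w i|.
Proof.
move=> b0.
set M := \sum_(i < n) `|w i|.
have wM : forall i, `|w i| <= M.
  move=> i; rewrite /M (bigD1 i) //= lerDl; by apply: sumr_ge0.
set Sg := \sum_(i < n) expR (beta * w i).
have S0 : 0 < Sg by exact: sumexp_gt0 j0.
have n0 : (0 < n)%N by case: j0 => k /=; case: n {w wM M Sg S0} => //.
have nR : 1 <= n%:R :> R by rewrite ler1n.
have hup : Sg <= n%:R * expR (beta * M).
  apply: (@le_trans _ _ (\sum_(i < n) expR (beta * M))); last first.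
    by rewrite sumr_const card_ord mulr_natl.
  apply: ler_sum => i _; rewrite ler_expR ler_pM2l //.
  by apply: le_trans (wM i); apply: ler_norm.
have hlo : expR (- (beta * M)) <= Sg.
  apply: (@le_trans _ _ (expR (beta * w j0))).
    rewrite ler_expR -mulrN ler_pM2l //.
    by rewrite lerNl; apply: le_trans (wM j0); rewrite -normrN ler_norm.
  rewrite /Sg (bigD1 j0) //= lerDl. by apply: sumr_ge0 => i _; apply: expR_ge0.
have l1 : ln Sg <= ln n%:R + beta * M.
  rewrite -[X in _ <= _ + X]expRK -lnM ?posrE ?expR_gt0 //; last by apply: lt_le_trans nR.
  by rewrite ler_ln // posrE ?mulr_gt0 ?expR_gt0 //; apply: lt_le_trans nR.
have l2 : - (beta * M) <= ln Sg.
  by rewrite -[X in X <= _]expRK ler_ln // posrE expR_gt0.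
have lnn : 0 <= ln n%:R :> R by apply: ln_ge0.
have bi : 0 < beta^-1 by rewrite invr_gt0.
have hbM : beta^-1 * (beta * M) = M by rewrite mulrA mulVf ?mul1r // gt_eqF.
rewrite /LSE -/Sg ler_norml; apply/andP; split.
- have : beta^-1 * (- (beta * M)) <= beta^-1 * ln Sg by rewrite ler_pM2l.
  have : 0 <= beta^-1 * ln n%:R by rewrite mulr_ge0 // ltW.
  rewrite mulrN hbM; lra.
- have : beta^-1 * ln Sg <= beta^-1 * (ln n%:R + beta * M) by rewrite ler_pM2l.
  rewrite mulrDr hbM; lra.
Qed.

End LSELemmas.
Section SumLemmas.
Variable R : realType.

Lemma cs_sum (I : finType) (x y : I -> R) :
  (\sum_i x i * y i) ^+ 2 <= (\sum_i x i ^+ 2) * (\sum_i y i ^+ 2).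
Proof.
set A := \sum_i x i ^+ 2. set B := \sum_i y i ^+ 2. set C := \sum_i x i * y i.
have e1 : \sum_i \sum_j (x i * y j) ^+ 2 = A * B.
  rewrite /A /B mulr_suml; apply: eq_bigr => i _; rewrite mulr_sumr.
  by apply: eq_bigr => j _; rewrite exprMn.
have e2 : \sum_i \sum_j (x j * y i) ^+ 2 = A * B.
  rewrite exchange_big /=; exact: e1.
have e3 : \sum_i \sum_j (x i * y j * (x j * y i)) = C ^+ 2.
  rewrite expr2 /C mulr_suml; apply: eq_bigr => i _; rewrite mulr_sumr.
  by apply: eq_bigr => j _; ring.
have H : 0 <= \sum_i \sum_j (x i * y j - x j * y i) ^+ 2.
  by apply: sumr_ge0 => i _; apply: sumr_ge0 => j _; apply: sqr_ge0.
have key : \sum_i \sum_j (x i * y j - x j * y i) ^+ 2 = 2 * (A * B - C ^+ 2).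
  transitivity (\sum_i (\sum_j (x i * y j) ^+ 2 + \sum_j (x j * y i) ^+ 2
                        - 2 * \sum_j (x i * y j * (x j * y i)))).
    apply: eq_bigr => i _; rewrite mulr_sumr -big_split -sumrB /=.
    by apply: eq_bigr => j _; ring.
  by rewrite sumrB big_split /= -mulr_sumr e1 e2 e3; ring.
rewrite key in H. lra.
Qed.

Lemma minkowski_sum (I : finType) (x y : I -> R) :
  Num.sqrt (\sum_i (x i + y i) ^+ 2)
    <= Num.sqrt (\sum_i x i ^+ 2) + Num.sqrt (\sum_i y i ^+ 2).
Proof.
set A := \sum_i x i ^+ 2. set B := \sum_i y i ^+ 2. set C := \sum_i x i * y i.
have A0 : 0 <= A by apply: sumr_ge0 => i _; apply: sqr_ge0.
have B0 : 0 <= B by apply: sumr_ge0 => i _; apply: sqr_ge0.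
have e : \sum_i (x i + y i) ^+ 2 = A + 2 * C + B.
  rewrite /A /B /C mulr_sumr -!big_split /=; apply: eq_bigr => i _; ring.
have hC : C <= Num.sqrt A * Num.sqrt B.
  apply: (le_trans (ler_norm C)); rewrite -sqrtr_sqr -sqrtrM //.
  apply: ler_wsqrtr; exact: cs_sum.
rewrite e -[X in _ <= X]ger0_norm ?addr_ge0 ?sqrtr_ge0 //.
rewrite -sqrtr_sqr; apply: ler_wsqrtr.
rewrite sqrrD !sqr_sqrtr //; lra.
Qed.

Lemma max0_sqrt_bound (a eps lam nu alpha : R) :
  0 <= lam -> 0 <= nu -> 0 < alpha ->
  Num.max (`|a| - eps) 0 <=
  Num.sqrt ((alpha^-1 * (lam - Num.max (lam - alpha * (a + eps)) 0)) ^+ 2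
          + (alpha^-1 * (nu - Num.max (nu - alpha * (- a + eps)) 0)) ^+ 2).
Proof.
move=> l0 n0 a0.
set X := alpha^-1 * _. set Y := alpha^-1 * _.
have hX : `|X| <= Num.sqrt (X ^+ 2 + Y ^+ 2).
  rewrite -sqrtr_sqr; apply: ler_wsqrtr; rewrite lerDl; exact: sqr_ge0.
have hY : `|Y| <= Num.sqrt (X ^+ 2 + Y ^+ 2).
  rewrite -sqrtr_sqr; apply: ler_wsqrtr; rewrite lerDr; exact: sqr_ge0.
have ai : alpha^-1 * alpha = 1 by rewrite mulVf // gt_eqF.
have [h|h] := leP (`|a| - eps) 0.
  by rewrite sqrtr_ge0.
have [a0'|a0'] := leP 0 a.
- rewrite ger0_norm // in h *.
  have hm : Num.max (nu - alpha * (- a + eps)) 0 = nu - alpha * (- a + eps).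
    rewrite max_l //; have : 0 <= alpha * (a - eps) by rewrite mulr_ge0 ?ltW //; lra.
    move=> H. have -> : - a + eps = - (a - eps) by ring. rewrite mulrN; lra.
  have hY' : Y = - (a - eps).
    rewrite /Y hm; have -> : nu - (nu - alpha * (- a + eps)) = alpha * (- a + eps) by ring.
    by rewrite mulrA ai mul1r; ring.
  apply: le_trans hY; rewrite hY' normrN ger0_norm //; exact: ltW.
- rewrite ltr0_norm // in h *.
  have hm : Num.max (lam - alpha * (a + eps)) 0 = lam - alpha * (a + eps).
    rewrite max_l //; have : 0 <= alpha * (- a - eps) by rewrite mulr_ge0 ?ltW //; lra.
    move=> H. have -> : a + eps = - (- a - eps) by ring. rewrite mulrN; lra.
  have hX' : X = a + eps.
    rewrite /X hm; have -> : lam - (lam - alpha * (a + eps)) = alpha * (a + eps) by ring.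
    by rewrite mulrA ai mul1r.
  apply: le_trans hX; rewrite hX' ltr0_norm; [lra | lra].
Qed.

End SumLemmas.
Section ExTheory.
Context (R : realType) (dT : measure_display) (T : measurableType dT)
  (P : probability T R).
Implicit Types (f g : T -> R) (M c : R).

Definition intg (f : T -> R) := P.-integrable setT (EFin \o f).

Lemma intg_fin f : intg f -> (\int[P]_w (f w)%:E)%E \is a fin_num.
Proof. by move=> h; exact: integrable_fin_num. Qed.

Lemma ExE f : intg f -> (\int[P]_w (f w)%:E = (Ex P f)%:E)%E.
Proof. by move=> h; rewrite /Ex fineK // intg_fin. Qed.

Lemma intg_bnd f M : measurable_fun setT f -> (forall w, `|f w| <= M) -> intg f.
Proof.
move=> mf fM; apply: (@le_integrable _ _ _ _ _ _ (EFin \o f) (EFin \o cst M)).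
- by [].
- exact/measurable_EFinP.
- move=> w _ /=; rewrite lee_fin; apply: le_trans (fM w) _.
  by apply: ler_norm.
- exact: finite_measure_integrable_cst.
Qed.

Lemma intg_meas f : intg f -> measurable_fun setT f.
Proof. by move=> h; apply/measurable_EFinP; exact: measurable_int h. Qed.

Lemma intgD f g : intg f -> intg g -> intg (fun w => f w + g w).
Proof.
move=> hf hg; rewrite /intg (_ : _ \o _ = (EFin \o f) \+ (EFin \o g))%E.
  exact: integrableD.
by apply/funext => w /=; rewrite EFinD.
Qed.

Lemma intgZ c f : intg f -> intg (fun w => c * f w).
Proof.
move=> hf; rewrite /intg (_ : _ \o _ = (fun x => c%:E * (EFin \o f) x))%E.
  exact: integrableZl.
by apply/funext => w /=; rewrite EFinM.
Qed.

Lemma intgN f : intg f -> intg (fun w => - f w).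
Proof.
move=> hf; rewrite (_ : (fun w => - f w) = (fun w => -1 * f w)).
  exact: intgZ.
by apply/funext => w; rewrite mulN1r.
Qed.

Lemma intgB f g : intg f -> intg g -> intg (fun w => f w - g w).
Proof. by move=> hf hg; apply: intgD => //; exact: intgN. Qed.

Lemma intg_cst c : intg (fun _ => c).
Proof. exact: finite_measure_integrable_cst. Qed.

Lemma intg_sum (I : Type) (r : seq I) (F : I -> T -> R) :
  (forall i, intg (F i)) -> intg (fun w => \sum_(i <- r) F i w).
Proof.
move=> hF; elim: r => [|i r ih].
  rewrite (_ : (fun w => _) = fun _ => 0); first exact: intg_cst.
  by apply/funext => w; rewrite big_nil.
rewrite (_ : (fun w => _) = fun w => F i w + \sum_(j <- r) F j w).
  exact: intgD.
by apply/funext => w; rewrite big_cons.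
Qed.

Lemma ExD f g : intg f -> intg g -> Ex P (fun w => f w + g w) = Ex P f + Ex P g.
Proof.
move=> hf hg; rewrite /Ex.
under eq_integral do rewrite EFinD.
rewrite integralD //; rewrite fineD //; exact: intg_fin.
Qed.

Lemma ExZ c f : intg f -> Ex P (fun w => c * f w) = c * Ex P f.
Proof.
move=> hf; rewrite /Ex.
under eq_integral do rewrite EFinM.
rewrite integralZl //; rewrite fineM //; exact: intg_fin.
Qed.

Lemma ExN f : intg f -> Ex P (fun w => - f w) = - Ex P f.
Proof.
move=> hf; rewrite (_ : (fun w => - f w) = (fun w => -1 * f w)).
  by rewrite ExZ // mulN1r.
by apply/funext => w; rewrite mulN1r.
Qed.

Lemma ExB f g : intg f -> intg g -> Ex P (fun w => f w - g w) = Ex P f - Ex P g.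
Proof. by move=> hf hg; rewrite ExD ?ExN //; exact: intgN. Qed.

Lemma Ex_cst c : Ex P (fun _ => c) = c.
Proof.
rewrite /Ex integral_cst //= probability_setT mule1 //.
Qed.

Lemma Ex_sum (I : Type) (r : seq I) (F : I -> T -> R) :
  (forall i, intg (F i)) -> Ex P (fun w => \sum_(i <- r) F i w) = \sum_(i <- r) Ex P (F i).
Proof.
move=> hF; elim: r => [|i r ih].
  rewrite (_ : (fun w => _) = fun _ => 0); first by rewrite Ex_cst big_nil.
  by apply/funext => w; rewrite big_nil.
rewrite (_ : (fun w => _) = fun w => F i w + \sum_(j <- r) F j w).
  by rewrite ExD ?ih ?big_cons //; exact: intg_sum.
by apply/funext => w; rewrite big_cons.
Qed.

Lemma Ex_le f g : intg f -> intg g -> (forall w, f w <= g w) -> Ex P f <= Ex P g.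
Proof.
move=> hf hg fg; rewrite /Ex; apply: fine_le; try exact: intg_fin.
by apply: le_integral => // w _; rewrite lee_fin.
Qed.

Lemma Ex_ge0 f : (forall w, 0 <= f w) -> 0 <= Ex P f.
Proof.
move=> f0; rewrite /Ex; apply: fine_ge0; apply: integral_ge0 => w _.
by rewrite lee_fin.
Qed.

Lemma Ex_abs_le f M : intg f -> (forall w, `|f w| <= M) -> `|Ex P f| <= M.
Proof.
move=> hf fM; rewrite ler_norml; apply/andP; split.
- rewrite -[X in X <= _](Ex_cst (- M)); apply: Ex_le => //; first exact: intg_cst.
  by move=> w; have := fM w; rewrite ler_norml => /andP[].
- rewrite -[X in _ <= X](Ex_cst M); apply: Ex_le => //; first exact: intg_cst.
  by move=> w; have := fM w; rewrite ler_norml => /andP[].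
Qed.

Lemma Ex_sq f : intg f -> intg (fun w => f w ^+ 2) -> Ex P f ^+ 2 <= Ex P (fun w => f w ^+ 2).
Proof.
move=> hf hf2; set m := Ex P f.
have h0 : 0 <= Ex P (fun w => (f w - m) ^+ 2) by apply: Ex_ge0 => w; exact: sqr_ge0.
have e : (fun w => (f w - m) ^+ 2) = (fun w => (f w ^+ 2 + (- (2 * m)) * f w) + m ^+ 2).
  by apply/funext => w; ring.
rewrite e ExD ?ExZ ?Ex_cst // in h0; last 2 first.
- by apply: intgD => //; exact: intgZ.
- exact: intg_cst.
rewrite ExD // in h0; last exact: intgZ.
rewrite ExZ // -/m in h0. lra.
exact: intg_cst.
Qed.

Lemma intg_dom f g : measurable_fun setT f -> intg g -> (forall w, `|f w| <= g w) -> intg f.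
Proof.
move=> mf hg fg; apply: (@le_integrable _ _ _ _ _ _ (EFin \o f) (EFin \o g)).
- by [].
- exact/measurable_EFinP.
- move=> w _ /=; rewrite lee_fin; apply: le_trans (fg w) _; exact: ler_norm.
- exact: hg.
Qed.

End ExTheory.
Import HBNNSimple.
Section CondId.
Context (R : realType) (dT : measure_display) (T : measurableType dT)
  (P : probability T R) (dZ : measure_display) (Z : measurableType dZ)
  (Y : T -> Z) (h : Z -> R) (E : set T).
Hypotheses (mY : measurable_fun setT Y) (mh : measurable_fun setT h)
  (hb : forall z, 0 <= h z <= 1) (mE : measurable E)
  (HY : forall A, measurable A ->
     (\int[P]_(w in Y @^-1` A) (h (Y w))%:E = P (Y @^-1` A `&` E))%E).

Let mhY : measurable_fun setT (fun w => h (Y w)).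
Proof. exact: measurableT_comp. Qed.

Let mIY A : measurable A -> measurable_fun setT (fun w => \1_A (Y w) : R).
Proof. by move=> mA; apply: measurableT_comp => //; exact: measurable_indic. Qed.

Let mIE : measurable_fun setT (\1_E : T -> R).
Proof. exact: measurable_indic. Qed.

Let indic_le1 (U : Type) (A : set U) (x : U) : `|\1_A x : R| <= 1.
Proof. by rewrite indicE; case: (x \in A); rewrite ?normr1 ?normr0. Qed.

Lemma cond_indic A : measurable A ->
  Ex P (fun w => \1_A (Y w) * h (Y w)) = Ex P (fun w => \1_A (Y w) * \1_E w).
Proof.
move=> mA; rewrite /Ex; congr fine.
have mYA : measurable (Y @^-1` A) by rewrite -[_ @^-1` _]setTI; exact: mY.
transitivity (\int[P]_(w in Y @^-1` A) (h (Y w))%:E)%E.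
  rewrite [RHS]integral_mkcond epatch_indic; apply: eq_integral => w _ /=.
  by rewrite -EFinM mulrC.
rewrite HY // -[X in P X](setIT (Y @^-1` A `&` E)) -integral_indic; last exact: measurableI.
apply: eq_integral => w _; rewrite indicI /=; congr (_ * _)%:E.
by [].
Qed.

Let intg_ind (A : set Z) (u : T -> R) : measurable A -> measurable_fun setT u ->
  (forall w, `|u w| <= 1) -> intg P (fun w => \1_A (Y w) * u w).
Proof.
move=> mA mu ub; apply: (@intg_bnd _ _ _ P _ 1).
  by apply: measurable_funM => //; exact: mIY.
move=> w; rewrite normrM -[1]mulr1; apply: ler_pM => //; exact: indic_le1.
Qed.

Lemma cond_sfun (k : {nnsfun Z >-> R}) :
  Ex P (fun w => k (Y w) * h (Y w)) = Ex P (fun w => k (Y w) * \1_E w).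
Proof.
pose sq := finmap.enum_fset (fset_set (k @` setT)).
have hk : forall x, k x = \sum_(i < size sq) (sq`_i * \1_(k @^-1` [set sq`_i]) x).
  exact: fimfunEord.
have mpre i : measurable (k @^-1` [set sq`_i]) by exact: measurable_funPTI.
have e : forall u : T -> R, (fun w => k (Y w) * u w) =
  (fun w => \sum_(i < size sq) sq`_i * (\1_(k @^-1` [set sq`_i]) (Y w) * u w)).
  move=> u; apply/funext => w; rewrite hk mulr_suml; apply: eq_bigr => i _.
  by rewrite mulrA.
have hb' w : `|h (Y w)| <= 1.
  by have := hb (Y w); case/andP => ? ?; rewrite ger0_norm.
rewrite !e !Ex_sum; last 2 first.
- move=> i; apply: intgZ; apply: intg_ind => //; exact: indic_le1.
- move=> i; apply: intgZ; apply: intg_ind => //.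
apply: eq_bigr => i _; rewrite !ExZ; last 2 first.
- apply: intg_ind => //; exact: indic_le1.
- exact: intg_ind.
by rewrite cond_indic.
Qed.

Lemma sfun_bnd (k : {nnsfun Z >-> R}) : exists M, forall z, `|k z| <= M.
Proof.
pose sq := finmap.enum_fset (fset_set (k @` setT)).
have hk : forall x, k x = \sum_(i < size sq) (sq`_i * \1_(k @^-1` [set sq`_i]) x).
  exact: fimfunEord.
exists (\sum_(i < size sq) `|sq`_i|) => z; rewrite hk.
apply: le_trans (ler_norm_sum _ _ _) _; apply: ler_sum => i _.
by rewrite normrM -[X in _ <= X]mulr1; apply: ler_wpM2l => //; exact: indic_le1.
Qed.

Lemma cond_sfun_int (k : {nnsfun Z >-> R}) :
  (\int[P]_w (k (Y w) * h (Y w))%:E = \int[P]_w (k (Y w) * \1_E w)%:E)%E.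
Proof.
have [M hM] := sfun_bnd k.
have mk : measurable_fun setT (fun w => k (Y w)) by apply: measurableT_comp.
have M0 : 0 <= M by apply: le_trans (hM (Y point)) ; exact: normr_ge0.
have hb' w : `|h (Y w)| <= 1.
  by have := hb (Y w); case/andP => ? ?; rewrite ger0_norm.
rewrite (ExE (f := fun w => k (Y w) * h (Y w))); last first.
  apply: (@intg_bnd _ _ _ P _ M); first exact: measurable_funM.
  by move=> w; rewrite normrM -[M]mulr1; apply: ler_pM => //.
rewrite (ExE (f := fun w => k (Y w) * \1_E w)); last first.
  apply: (@intg_bnd _ _ _ P _ M); first exact: measurable_funM.
  by move=> w; rewrite normrM -[M]mulr1; apply: ler_pM => //; exact: indic_le1.
by rewrite cond_sfun.
Qed.

Lemma cond_fun (g : Z -> R) : measurable_fun setT g -> (forall z, 0 <= g z <= 1) ->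
  Ex P (fun w => g (Y w) * h (Y w)) = Ex P (fun w => g (Y w) * \1_E w).
Proof.
move=> mg gb.
have mG : measurable_fun setT (EFin \o g) by apply/measurable_EFinP.
pose k := nnsfun_approx measurableT mG.
have G0 : forall z, setT z -> (0 <= (EFin \o g) z)%E.
  by move=> z _; rewrite lee_fin; case/andP: (gb z).
have lim_int : forall u : T -> R, measurable_fun setT u -> (forall w, 0 <= u w) ->
   (\int[P]_w (g (Y w) * u w)%:E = limn (fun n => \int[P]_w ((k n (Y w)) * u w)%:E))%E.
  move=> u mu u0.
  rewrite -monotone_convergence //.
  - apply: eq_integral => w _; apply/esym/cvg_lim => //.
    under eq_fun do rewrite EFinM. rewrite EFinM. apply: cvgeZr => //.
    have := @cvg_nnsfun_approx _ _ _ _ measurableT _ mG G0 (Y w) I. exact.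
  - move=> n; apply/measurable_EFinP; apply: measurable_funM => //.
    by apply: measurableT_comp.
  - by move=> n w _; rewrite lee_fin mulr_ge0.
  - by move=> w _ m n mn; rewrite lee_fin ler_wpM2r //; exact/lefP/nd_nnsfun_approx.
rewrite /Ex (lim_int _ mhY); last by move=> w; case/andP: (hb (Y w)).
rewrite (lim_int _ mIE); last by move=> w; rewrite indicE.
congr (fine (limn _)); apply/funext => n.
exact: cond_sfun_int.
Qed.

End CondId.
Section Meas.
Context (R : realType) (d K L : nat) (B beta : R) (p : 'I_K -> R)
  (etah : d.-tuple R -> R) (tauh : 'I_K -> d.-tuple R -> R)
  (Lam V : 'M[R]_(2 * L + 1, K)).
Hypotheses (mEta : measurable_fun setT etah) (mTauh : forall s, measurable_fun setT (tauh s)).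

Lemma m_that s : measurable_fun setT (that p tauh s).
Proof.
rewrite (_ : that p tauh s = (fun _ => 1) \- (fun x => tauh s x * (p s)^-1)).
  by apply: measurable_funB => //; apply: measurable_funM.
by apply/funext => x.
Qed.

Lemma m_rhat (l : 'I_(2 * L + 1)) : measurable_fun setT (rhat B etah l).
Proof.
rewrite (_ : rhat B etah l = (fun x => (etah x - gridv B l) ^+ 2)) //.
by apply: measurable_funX; apply: measurable_funB.
Qed.

Lemma m_score l : measurable_fun setT (fun x => scorev B p etah tauh Lam V x l).
Proof.
rewrite (_ : (fun x => _) = (fun x => \sum_(s < K) (Lam l s - V l s) * that p tauh s x)
   \- rhat B etah l) //.
apply: measurable_funB; last exact: m_rhat.
apply: measurable_sum => s; apply: measurable_funM => //; exact: m_that.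
Qed.

Lemma m_sumexp : measurable_fun setT
  (fun x => \sum_(l < 2 * L + 1) expR (beta * scorev B p etah tauh Lam V x l)).
Proof.
apply: measurable_sum => l; apply: measurableT_comp; first exact: measurable_expR.
apply: measurable_funM => //; exact: m_score.
Qed.

Lemma m_LSE : measurable_fun setT (fun x => LSE beta (scorev B p etah tauh Lam V x)).
Proof.
rewrite /LSE; apply: measurable_funM => //.
apply: measurableT_comp; first exact: measurable_ln.
exact: m_sumexp.
Qed.

Lemma m_pihat l : measurable_fun setT (pihat B beta p etah tauh Lam V l).
Proof.
rewrite (_ : pihat B beta p etah tauh Lam V l = (fun x =>
   expR (beta * scorev B p etah tauh Lam V x l) *
   expR (- ln (\sum_(l' < 2 * L + 1) expR (beta * scorev B p etah tauh Lam V x l'))))).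
  apply: measurable_funM.
    apply: measurableT_comp; first exact: measurable_expR.
    apply: measurable_funM => //; exact: m_score.
  apply: measurableT_comp; first exact: measurable_expR.
  apply: measurableT_comp => //; apply: measurableT_comp; first exact: measurable_ln.
  exact: m_sumexp.
apply/funext => x; rewrite /pihat /softmax expRN lnK // posrE.
exact: sumexp_gt0 l.
Qed.

End Meas.
Section Deriv.
Variable R : realType.

Lemma gcont (C k : R) : (fun h : R => C * (expR (k * `|h|) - 1)) @ (0 : R)^' --> (0 : R).
Proof.
have e0 : C * (expR (k * `|0 : R|) - 1) = 0 by rewrite normr0 mulr0 expR0 subrr mulr0.
rewrite -[X in _ --> X]e0.
apply: cvg_within_filter.
apply: cvgM; first exact: cvg_cst.
apply: cvgB; last exact: cvg_cst.
apply: (@cvg_comp _ _ _ (fun h => k * `|h|) expR).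
  apply: cvgM; first exact: cvg_cst.
  by apply: cvg_norm; exact: cvg_id.
exact: continuous_expR.
Qed.

Lemma derive1_of_bound (f : R -> R) (a : R) (g : R -> R) :
  g @ (0 : R)^' --> (0 : R) ->
  (forall h, h != 0 -> `|f h - f 0 - h * a| <= `|h| * g h) -> derive1 f 0 = a.
Proof.
move=> gc hb; rewrite /derive1; apply: cvg_lim => //.
apply/cvgrPdist_le => e e0.
move/cvgrPdist_le : gc => /(_ e e0) H.
near=> t.
have t0 : t != 0 by near: t; exact: nbhs_dnbhs_neq.
have gt : `|0 - g t| <= e by near: t; exact: H.
rewrite addr0.
have -> : a - t^-1 *: (f t - f 0) = - (t^-1 * (f t - f 0 - t * a)).
  rewrite /GRing.scale /=; field; exact: t0.
rewrite normrN normrM normfV.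
have tp : 0 < `|t| by rewrite normr_gt0.
apply: (@le_trans _ _ (g t)).
  rewrite ler_pdivrMl //; exact: hb.
by apply: le_trans gt; rewrite sub0r normrN ler_norm.
Unshelve. all: by end_near.
Qed.

End Deriv.
Section Main.
Context (R : realType) (dT : measure_display) (T : measurableType dT)
  (P : probability T R) (d K L : nat)
  (X : T -> d.-tuple R) (S : T -> 'I_K)
  (tau : 'I_K -> d.-tuple R -> R)
  (etah : d.-tuple R -> R) (tauh : 'I_K -> d.-tuple R -> R)
  (B beta : R) (eps : 'I_K -> R) (p : 'I_K -> R).
Hypotheses (mX : measurable_fun setT X)
  (mS : forall s, measurable (S @^-1` [set s]))
  (hp : forall s, p s = fine (P (S @^-1` [set s])))
  (p0 : forall s, 0 < p s)
  (mtau : forall s, measurable_fun setT (tau s))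
  (taub : forall s x, 0 <= tau s x <= 1)
  (tauH : forall s A, measurable A ->
     (\int[P]_(w in X @^-1` A) (tau s (X w))%:E
       = P (X @^-1` A `&` S @^-1` [set s]))%E)
  (b0 : 0 < beta)
  (mEta : measurable_fun setT etah)
  (mTauh : forall s, measurable_fun setT (tauh s))
  (tauhb : forall s x, 0 <= tauh s x <= 1)
  (intEta : P.-integrable setT (fun w => ((etah (X w)) ^+ 2)%:E)).

Lemma n_gt0 : (0 < 2 * L + 1)%N. Proof. by rewrite addn1. Qed.
Definition j0 : 'I_(2 * L + 1) := @Ordinal (2 * L + 1) 0 n_gt0.

Definition Cm := \sum_(s < K) (1 + (p s)^-1).

Lemma Cm_ge0 : 0 <= Cm.
Proof. apply: sumr_ge0 => s _; apply: addr_ge0 => //; rewrite invr_ge0 ltW //. Qed.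

Lemma bnd_1p (s : 'I_K) (u : R) : 0 <= u <= 1 -> `|1 - u / p s| <= Cm.
Proof.
move=> /andP[u0 u1].
have pi0 : 0 < (p s)^-1 by rewrite invr_gt0.
apply: (@le_trans _ _ (1 + (p s)^-1)).
  apply: le_trans (ler_normB _ _) _; rewrite normr1 lerD2l normrM ger0_norm //.
  by rewrite gtr0_norm // -[X in _ <= X]mul1r ler_wpM2r // ltW.
rewrite /Cm (bigD1 s) //= lerDl; apply: sumr_ge0 => i _.
by apply: addr_ge0 => //; rewrite invr_ge0 ltW.
Qed.

Lemma that_bnd s x : `|that p tauh s x| <= Cm.
Proof. exact: bnd_1p. Qed.

Lemma t_bnd s x : `|1 - tau s x / p s| <= Cm.
Proof. exact: bnd_1p. Qed.

Section Mats.
Variables (M N : 'M[R]_(2 * L + 1, K)).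

Definition qq l w := pihat B beta p etah tauh M N l (X w).
Definition cc s w := that p tauh s (X w).
Definition ttt s w := 1 - tau s (X w) / p s.

Lemma m_qq l : measurable_fun setT (qq l).
Proof. apply: measurableT_comp => //; exact: m_pihat. Qed.

Lemma m_cc s : measurable_fun setT (cc s).
Proof. apply: measurableT_comp => //; exact: m_that. Qed.

Lemma m_ttt s : measurable_fun setT (ttt s).
Proof.
apply: measurable_funB => //; apply: measurable_funM => //.
exact: measurableT_comp.
Qed.

Lemma qq_ge0 l w : 0 <= qq l w.
Proof. exact: softmax_ge0. Qed.

Lemma qq_le1 l w : qq l w <= 1.
Proof. exact: softmax_le1. Qed.

Lemma qq_sum w : \sum_(l < 2 * L + 1) qq l w = 1.
Proof. exact: softmax_sum j0. Qed.

Lemma qq_abs l w : `|qq l w| <= 1.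
Proof. by rewrite ger0_norm ?qq_ge0 ?qq_le1. Qed.

Lemma intg_qc l s : intg P (fun w => qq l w * cc s w).
Proof.
apply: (@intg_bnd _ _ _ P _ Cm); first by apply: measurable_funM; [exact: m_qq|exact: m_cc].
move=> w; rewrite normrM -[Cm]mul1r; apply: ler_pM => //; [exact: qq_abs|exact: that_bnd].
Qed.

Lemma intg_qt l s : intg P (fun w => qq l w * ttt s w).
Proof.
apply: (@intg_bnd _ _ _ P _ Cm); first by apply: measurable_funM; [exact: m_qq|exact: m_ttt].
move=> w; rewrite normrM -[Cm]mul1r; apply: ler_pM => //; [exact: qq_abs|exact: t_bnd].
Qed.

Lemma intg_q l : intg P (qq l).
Proof. apply: (@intg_bnd _ _ _ P _ 1); [exact: m_qq|exact: qq_abs]. Qed.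

Lemma score_bnd x l : `|scorev B p etah tauh M N x l| <=
  \sum_(s < K) `|M l s - N l s| * Cm + 2 * etah x ^+ 2 + 2 * gridv B l ^+ 2.
Proof.
rewrite /scorev; apply: le_trans (ler_normB _ _) _; rewrite -addrA; apply: lerD.
  apply: le_trans (ler_norm_sum _ _ _) _; apply: ler_sum => s _.
  rewrite normrM; apply: ler_wpM2l => //; exact: that_bnd.
rewrite /rhat ger0_norm ?sqr_ge0 //.
have := sqr_ge0 (etah x + gridv B l); rewrite sqrrD sqrrB; lra.
Qed.

Lemma intg_LSE : intg P (fun w => LSE beta (scorev B p etah tauh M N (X w))).
Proof.
apply: (@intg_dom _ _ _ P _ (fun w => beta^-1 * ln (2 * L + 1)%:R +
   \sum_(l < 2 * L + 1) (\sum_(s < K) `|M l s - N l s| * Cm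
          + 2 * etah (X w) ^+ 2 + 2 * gridv B l ^+ 2))).
- apply: (measurableT_comp (f := fun x => LSE beta (scorev B p etah tauh M N x))) => //; exact: m_LSE.
- apply: intgD; first exact: intg_cst.
  apply: intg_sum => l; apply: intgD; last exact: intg_cst.
  apply: intgD; first exact: intg_cst.
  apply: intgZ; exact: intEta.
- move=> w; apply: le_trans (LSE_bound _ j0 b0) _; rewrite lerD2l.
  apply: ler_sum => l _; exact: score_bnd.
Qed.

Lemma cond_q l s : Ex P (fun w => qq l w * Defs.indic R (S w == s))
   = Ex P (fun w => qq l w * tau s (X w)).
Proof.
rewrite (_ : (fun w => qq l w * Defs.indic R (S w == s)) =
   (fun w => pihat B beta p etah tauh M N l (X w) * \1_(S @^-1` [set s]) w)); last first.
  apply/funext => w; rewrite /qq; congr (_ * _); rewrite /Defs.indic indicE.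
  case: eqP => [e|ne]; first by rewrite mem_set.
  by rewrite memNset.
symmetry; apply: (@cond_fun _ _ _ P _ _ X (tau s) (S @^-1` [set s]) mX (mtau s) (taub s) (mS s) (tauH s)
  (pihat B beta p etah tauh M N l)).
- exact: m_pihat.
- move=> z; apply/andP; split; [exact: softmax_ge0|exact: softmax_le1].
Qed.

Lemma intg_qtau l s : intg P (fun w => qq l w * tau s (X w)).
Proof.
apply: (@intg_bnd _ _ _ P _ 1).
  apply: measurable_funM; first exact: m_qq.
  exact: measurableT_comp.
move=> w; rewrite normrM -[1]mul1r; apply: ler_pM => //; first exact: qq_abs.
by have := taub s (X w); case/andP => ? ?; rewrite ger0_norm.
Qed.

Lemma Ufair_eq s l : Ufair P p X S (pihat B beta p etah tauh M N) s l
   = `|Ex P (fun w => qq l w * ttt s w)|.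
Proof.
rewrite /Ufair.
have -> : Ex P (fun w => pihat B beta p etah tauh M N l (X w) * Defs.indic R (S w == s))
   = Ex P (fun w => qq l w * tau s (X w)) by exact: cond_q.
rewrite (_ : (fun w => qq l w * ttt s w) =
   (fun w => qq l w - (p s)^-1 * (qq l w * tau s (X w)))); last first.
  by apply/funext => w; rewrite /ttt; ring.
rewrite ExB; last 2 first.
- exact: intg_q.
- apply: intgZ; exact: intg_qtau.
rewrite ExZ; last exact: intg_qtau.
rewrite -normrN; congr `|_|; rewrite /qq; ring.
Qed.

End Mats.
Lemma score_shift_lam (M N : 'M[R]_(2 * L + 1, K)) l0 s0 h x l :
  scorev B p etah tauh (M + h *: delta_mx l0 s0) N x l
  = scorev B p etah tauh M N x l + (l == l0)%:R * (h * that p tauh s0 x).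
Proof.
rewrite /scorev; rewrite (bigD1 s0) //= [in RHS](bigD1 s0) //= !mxE eqxx andbT.
rewrite (eq_bigr (fun s => (M l s - N l s) * that p tauh s x)); last first.
  by move=> s /negPf ns; rewrite !mxE ns andbF mulr0 addr0.
ring.
Qed.

Lemma score_shift_nu (M N : 'M[R]_(2 * L + 1, K)) l0 s0 h x l :
  scorev B p etah tauh M (N + h *: delta_mx l0 s0) x l
  = scorev B p etah tauh M N x l + (l == l0)%:R * (- h * that p tauh s0 x).
Proof.
rewrite /scorev; rewrite (bigD1 s0) //= [in RHS](bigD1 s0) //= !mxE eqxx andbT.
rewrite (eq_bigr (fun s => (M l s - N l s) * that p tauh s x)); last first.
  by move=> s /negPf ns; rewrite !mxE ns andbF mulr0 addr0.
ring.
Qed.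

Lemma lin_shift (M N : 'M[R]_(2 * L + 1, K)) l0 s0 h :
  \sum_(l < 2 * L + 1) \sum_(s < K) ((M + h *: delta_mx l0 s0) l s + N l s) * eps s
  = \sum_(l < 2 * L + 1) \sum_(s < K) (M l s + N l s) * eps s + h * eps s0.
Proof.
rewrite (bigD1 l0) //= [in RHS](bigD1 l0) //=.
rewrite (eq_bigr (fun l => \sum_(s < K) (M l s + N l s) * eps s)); last first.
  move=> l /negPf nl; apply: eq_bigr => s _; by rewrite !mxE nl mulr0 addr0.
rewrite (bigD1 s0) //= [in RHS](bigD1 s0) //= !mxE !eqxx /=.
rewrite (eq_bigr (fun s => (M l0 s + N l0 s) * eps s)); last first.
  by move=> s /negPf ns; rewrite !mxE eqxx ns mulr0 addr0.
ring.
Qed.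

Lemma lin_shift_nu (M N : 'M[R]_(2 * L + 1, K)) l0 s0 h :
  \sum_(l < 2 * L + 1) \sum_(s < K) (M l s + (N + h *: delta_mx l0 s0) l s) * eps s
  = \sum_(l < 2 * L + 1) \sum_(s < K) (M l s + N l s) * eps s + h * eps s0.
Proof.
rewrite (bigD1 l0) //= [in RHS](bigD1 l0) //=.
rewrite (eq_bigr (fun l => \sum_(s < K) (M l s + N l s) * eps s)); last first.
  move=> l /negPf nl; apply: eq_bigr => s _; by rewrite !mxE nl mulr0 addr0.
rewrite (bigD1 s0) //= [in RHS](bigD1 s0) //= !mxE !eqxx /=.
rewrite (eq_bigr (fun s => (M l0 s + N l0 s) * eps s)); last first.
  by move=> s /negPf ns; rewrite !mxE eqxx ns mulr0 addr0.
ring.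
Qed.
Lemma LSE_diff_bnd (M N M' N' : 'M[R]_(2 * L + 1, K)) l0 s0 (k : R) :
  (forall x l, scorev B p etah tauh M' N' x l
     = scorev B p etah tauh M N x l + (l == l0)%:R * (k * that p tauh s0 x)) ->
  `|Ex P (fun w => LSE beta (scorev B p etah tauh M' N' (X w)))
    - Ex P (fun w => LSE beta (scorev B p etah tauh M N (X w)))
    - k * Ex P (fun w => qq M N l0 w * cc s0 w)|
  <= `|k| * (Cm * (expR (beta * Cm * `|k|) - 1)).
Proof.
move=> H.
rewrite -ExB; [|exact: intg_LSE|exact: intg_LSE].
rewrite -ExZ; last exact: intg_qc.
rewrite -ExB; last 2 first.
- by apply: intgB; exact: intg_LSE.
- by apply: intgZ; exact: intg_qc.
apply: Ex_abs_le.
  apply: intgB; first by apply: intgB; exact: intg_LSE.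
  by apply: intgZ; exact: intg_qc.
move=> w.
set x := X w.
have eS : scorev B p etah tauh M' N' x =
   (fun l => scorev B p etah tauh M N x l + (l == l0)%:R * (k * that p tauh s0 x)).
  by apply/funext => l; exact: H.
rewrite eS LSE_shift //.
set y := k * that p tauh s0 x.
have -> : k * (qq M N l0 w * cc s0 w) = softmax (fun i => beta * scorev B p etah tauh M N x i) l0 * y.
  by rewrite /qq /cc /y /pihat -/x; ring.
have Hq : 0 <= softmax (fun i => beta * scorev B p etah tauh M N x i) l0 <= 1.
  by apply/andP; split; [exact: softmax_ge0|exact: softmax_le1].
apply: le_trans (lse_core y Hq b0) _.
have hy : `|y| <= `|k| * Cm by rewrite /y normrM ler_wpM2l //; exact: that_bnd.
have ey : 0 <= expR (beta * `|y|) - 1.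
  by rewrite subr_ge0 -expR0 ler_expR mulr_ge0 // ltW.
rewrite mulrA; apply: ler_pM => //.
rewrite lerD2r ler_expR -mulrA ler_pM2l // mulrC; exact: hy.
Qed.
Lemma dF_lam_eq (M N : 'M[R]_(2 * L + 1, K)) l s :
  dF_lam P B beta eps p etah tauh X M N l s = Ex P (fun w => qq M N l w * cc s w) + eps s.
Proof.
rewrite /dF_lam.
apply: (derive1_of_bound (g := fun h => Cm * (expR (beta * Cm * `|h|) - 1))).
  exact: gcont.
move=> h _.
rewrite /Fhat scale0r addr0 lin_shift.
have := @LSE_diff_bnd M N (M + h *: delta_mx l s) N l s h
  (fun x l' => score_shift_lam M N l s h x l').
set E1 := Ex P _. set E0 := Ex P _. set A := Ex P _.
set Ls := \sum_(l0 < 2 * L + 1) _.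
have -> : E1 + (Ls + h * eps s) - (E0 + Ls) - h * (A + eps s) = E1 - E0 - h * A by ring.
by [].
Qed.

Lemma dF_nu_eq (M N : 'M[R]_(2 * L + 1, K)) l s :
  dF_nu P B beta eps p etah tauh X M N l s = - Ex P (fun w => qq M N l w * cc s w) + eps s.
Proof.
rewrite /dF_nu.
apply: (derive1_of_bound (g := fun h => Cm * (expR (beta * Cm * `|h|) - 1))).
  exact: gcont.
move=> h _.
rewrite /Fhat scale0r addr0 lin_shift_nu.
have := @LSE_diff_bnd M N M (N + h *: delta_mx l s) l s (- h)
  (fun x l' => score_shift_nu M N l s h x l').
rewrite normrN.
set E1 := Ex P _. set E0 := Ex P _. set A := Ex P _.
set Ls := \sum_(l0 < 2 * L + 1) _.
have -> : E1 + (Ls + h * eps s) - (E0 + Ls) - h * (- A + eps s) = E1 - E0 - - h * A by ring.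
by [].
Qed.
Section Final.
Variables (Lam V : 'M[R]_(2 * L + 1, K)) (alpha : R).
Hypotheses (Lam0 : forall l s, 0 <= Lam l s) (V0 : forall l s, 0 <= V l s)
  (a0 : 0 < alpha).

Let q := qq Lam V.
Let Dl s w := cc s w - ttt s w.

Let mD s : measurable_fun setT (Dl s).
Proof. apply: measurable_funB; [exact: m_cc|exact: m_ttt]. Qed.

Let Dbnd s w : `|Dl s w| <= Cm + Cm.
Proof. apply: le_trans (ler_normB _ _) _; apply: lerD; [exact: that_bnd|exact: t_bnd]. Qed.

Let Cm0 := Cm_ge0.

Let intg_qD l s : intg P (fun w => q l w * Dl s w).
Proof.
apply: (@intg_bnd _ _ _ P _ (Cm + Cm)); first exact: (measurable_funM (m_qq Lam V l) (mD s)).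
move=> w; rewrite normrM -[X in _ <= X]mul1r; apply: ler_pM => //; first [exact: qq_abs|exact: Dbnd].
Qed.

Let intg_qD2 l s : intg P (fun w => (q l w * Dl s w) ^+ 2).
Proof.
apply: (@intg_bnd _ _ _ P _ ((Cm + Cm) ^+ 2)).
  exact: (measurable_funX 2 (measurable_funM (m_qq Lam V l) (mD s))).
move=> w; rewrite normrX; apply: lerXn2r; rewrite ?nnegrE //; first exact: addr_ge0.
rewrite normrM -[X in _ <= X]mul1r; apply: ler_pM => //; first [exact: qq_abs|exact: Dbnd].
Qed.

Let intg_D2q l s : intg P (fun w => q l w * Dl s w ^+ 2).
Proof.
apply: (@intg_bnd _ _ _ P _ ((Cm + Cm) ^+ 2)).
  exact: (measurable_funM (m_qq Lam V l) (measurable_funX 2 (mD s))).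
move=> w; rewrite normrM -[X in _ <= X]mul1r; apply: ler_pM => //; first exact: qq_abs.
rewrite normrX; apply: lerXn2r; rewrite ?nnegrE //; first exact: addr_ge0.
Qed.

Let intg_D2 s : intg P (fun w => Dl s w ^+ 2).
Proof.
apply: (@intg_bnd _ _ _ P _ ((Cm + Cm) ^+ 2)).
  exact: (measurable_funX 2 (mD s)).
move=> w; rewrite normrX; apply: lerXn2r; rewrite ?nnegrE //; first exact: addr_ge0.
Qed.

Lemma b_bound :
  \sum_(l < 2 * L + 1) \sum_(s < K) `|Ex P (fun w => q l w * Dl s w)| ^+ 2
  <= Ex P (fun w => \sum_(s < K) Dl s w ^+ 2).
Proof.
apply: (@le_trans _ _ (\sum_(l < 2 * L + 1) \sum_(s < K) Ex P (fun w => q l w * Dl s w ^+ 2))).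
  apply: ler_sum => l _; apply: ler_sum => s _.
  rewrite -normrX ger0_norm ?sqr_ge0 //.
  apply: le_trans (Ex_sq (intg_qD l s) (intg_qD2 l s)) _.
  apply: Ex_le => // w.
  rewrite exprMn; apply: ler_wpM2r; first exact: sqr_ge0.
  rewrite expr2 -[X in _ <= X]mulr1; apply: ler_wpM2l; [exact: qq_ge0|exact: qq_le1].
rewrite exchange_big /= Ex_sum; last by move=> s; exact: intg_D2.
apply: ler_sum => s _.
rewrite -Ex_sum; last by move=> l; exact: intg_D2q.
rewrite (_ : (fun w => \sum_(i < 2 * L + 1) q i w * Dl s w ^+ 2) = (fun w => Dl s w ^+ 2)) //.
by apply/funext => w; rewrite -mulr_suml qq_sum mul1r.
Qed.

Lemma final_ineq :
  Num.sqrt (\sum_(l < 2 * L + 1) \sum_(s < K)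
     (Num.max (Ufair P p X S (pihat B beta p etah tauh Lam V) s l - eps s) 0) ^+ 2)
  <= Gmap_norm P B beta eps p etah tauh X alpha Lam V
     + Num.sqrt (Ex P (fun w => \sum_(s < K)
                   (that p tauh s (X w) - (1 - tau s (X w) / p s)) ^+ 2)).
Proof.
pose a l s := Ex P (fun w => q l w * cc s w).
pose bb l s := Ex P (fun w => q l w * Dl s w).
pose G l s := Num.sqrt (Gmap_lam P B beta eps p etah tauh X alpha Lam V l s ^+ 2
                      + Gmap_nu P B beta eps p etah tauh X alpha Lam V l s ^+ 2).
have hU : forall l s, Num.max (Ufair P p X S (pihat B beta p etah tauh Lam V) s l - eps s) 0
                     <= G l s + `|bb l s|.
  move=> l s; rewrite Ufair_eq.
  have e : Ex P (fun w => qq Lam V l w * ttt s w) = a l s - bb l s.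
    rewrite /a /bb -ExB; [|exact: intg_qc|exact: intg_qD].
    by congr (Ex P _); apply/funext => w; rewrite /q /Dl; ring.
  rewrite e.
  have hG : Num.max (`|a l s| - eps s) 0 <= G l s.
    rewrite /G /Gmap_lam /Gmap_nu dF_lam_eq dF_nu_eq; exact: max0_sqrt_bound.
  have tri : `|a l s - bb l s| <= `|a l s| + `|bb l s| by exact: ler_normB.
  have hm : `|a l s| - eps s <= Num.max (`|a l s| - eps s) 0 by rewrite le_max lexx.
  have G0 : 0 <= G l s by exact: sqrtr_ge0.
  have b0' : 0 <= `|bb l s| by exact: normr_ge0.
  have [h1|h1] := leP (`|a l s - bb l s| - eps s) 0; first lra.
  lra.
have step2 : Num.sqrt (\sum_(l < 2 * L + 1) \sum_(s < K)
     (Num.max (Ufair P p X S (pihat B beta p etah tauh Lam V) s l - eps s) 0) ^+ 2)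
   <= Num.sqrt (\sum_(l < 2 * L + 1) \sum_(s < K) (G l s + `|bb l s|) ^+ 2).
  apply: ler_wsqrtr; apply: ler_sum => l _; apply: ler_sum => s _.
  have h0 : 0 <= Num.max (Ufair P p X S (pihat B beta p etah tauh Lam V) s l - eps s) 0.
    by rewrite le_max lexx orbT.
  by rewrite !expr2; apply: ler_pM => //; exact: hU.
apply: le_trans step2 _.
rewrite (pair_bigA _ (fun l s => (G l s + `|bb l s|) ^+ 2)) /=.
apply: le_trans (minkowski_sum (fun ls => G ls.1 ls.2) (fun ls => `|bb ls.1 ls.2|)) _.
apply: lerD.
  rewrite -(pair_bigA _ (fun l s => G l s ^+ 2)) /Gmap_norm.
  apply: ler_wsqrtr; apply: ler_sum => l _; apply: ler_sum => s _.
  rewrite /G sqr_sqrtr //; apply: addr_ge0; exact: sqr_ge0.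
rewrite -(pair_bigA _ (fun l s => `|bb l s| ^+ 2)).
apply: ler_wsqrtr; exact: b_bound.
Qed.

End Final.
End Main.

Theorem lemma5p1 (R : realType) (dT : measure_display) (T : measurableType dT)
  (P : probability T R) (d K L : nat)
  (X : T -> d.-tuple R) (S : T -> 'I_K) (Y : T -> R)
  (tau : 'I_K -> d.-tuple R -> R)
  (etah : d.-tuple R -> R) (tauh : 'I_K -> d.-tuple R -> R)
  (B beta alpha : R) (eps : 'I_K -> R) (Lam V : 'M[R]_(2 * L + 1, K)) :
  (2 <= K)%N -> (1 <= d)%N -> (1 <= L)%N ->
  measurable_fun setT X -> measurable_fun setT Y ->
  (forall s, measurable (S @^-1` [set s])) ->
  (* p_s = P(S = s) > 0 *)
  (forall s, 0 < fine (P (S @^-1` [set s]))) ->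
  (* tau_s(x) = P(S = s | X = x) *)
  (forall s, measurable_fun setT (tau s)) ->
  (forall s x, 0 <= tau s x <= 1) ->
  (forall s A, measurable A ->
     (\int[P]_(w in X @^-1` A) (tau s (X w))%:E
       = P (X @^-1` A `&` S @^-1` [set s]))%E) ->
  0 < B -> 0 < beta ->
  (forall s, 0 <= eps s <= 1) ->
  measurable_fun setT etah ->
  (forall s, measurable_fun setT (tauh s)) ->
  (forall s x, 0 <= tauh s x <= 1) ->
  P.-integrable setT (fun w => ((etah (X w)) ^+ 2)%:E) ->
  (forall l s, 0 <= Lam l s) -> (forall l s, 0 <= V l s) ->
  0 < alpha ->
  let p := fun s => fine (P (S @^-1` [set s])) in
  let t := fun s x => 1 - tau s x / p s in
  Num.sqrt (\sum_(l < 2 * L + 1) \sum_(s < K)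
     (Num.max (Ufair P p X S (pihat B beta p etah tauh Lam V) s l - eps s) 0) ^+ 2)
  <= Gmap_norm P B beta eps p etah tauh X alpha Lam V
     + Num.sqrt (Ex P (fun w => \sum_(s < K)
                   (that p tauh s (X w) - t s (X w)) ^+ 2)).
Proof.
move=> _ _ _ mX _ mS pS mtau taub tauH _ b0 _ mEta mTauh tauhb intEta Lam0 V0 a0.
exact: (@final_ineq R dT T P d K L X S tau etah tauh B beta eps (fun s => fine (P (S @^-1` [set s]))) mX mS pS mtau taub tauH
  b0 mEta mTauh tauhb intEta Lam V alpha Lam0 V0 a0).
Qed.
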